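(* Let $B_J=L+U\in\mathbb R^{n\times n}$ with $L$ strictly lower triangular, $U$ strictly upper triangular, and let $c\in\mathbb R^n$. Let $y^{(0)}\in\mathbb R^n$ and $y^{(k+1)}=(I-U)^{-1}(Ly^{(k)}+c)$ for $k\ge0$ (backward Gauss–Seidel). Consider the FUTC scheme: given $x^{(0)}_1,\dots,x^{(0)}_{n-1}\in\mathbb R^n$ arbitrary and $x^{(0)}_n=y^{(0)}$, for $k\ge0$ and $i=1,\dots,n$, $$x^{(k+1)}_i=\sum_{m=1}^{i-1}U^{(n+1-m)}_c x^{(k+1)}_m+\sum_{m=i}^{n-1}U^{(n+1-m)}_c x^{(k)}_m+Lx^{(k)}_n+c.$$ Then $x^{(k)}_n=y^{(k)}$ for all $k\ge0$, independently of $x^{(0)}_1,\dots,x^{(0)}_{n-1}$.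
   Context: For $j\in\{2,\dots,n\}$, $U^{(j)}_c$ is the $n\times n$ matrix whose $j$-th column agrees with the $j$-th column of $U$ in rows $i\le j-1$ and which is zero elsewhere (the $j$-th column of $U$). Empty sums are zero. *)

(* Defs.v *)
From HB Require Import structures.
From mathcomp Require Import all_boot all_order all_algebra.
From mathcomp Require Import reals.
Set Implicit Arguments. Unset Strict Implicit. Unset Printing Implicit Defensive.
Import Order.TTheory GRing.Theory Num.Theory.
Local Open Scope ring_scope.

(* Indices in the paper are 1-based; matrix entries use 0-based ordinals.
   Entry (r, s) of a matrix corresponds to paper entry (r+1, s+1). *)

Definition strictly_lower (R : ringType) (n : nat) (A : 'M[R]_n) : Prop :=
  forall i j : 'I_n, (i <= j)%N -> A i j = 0.

Definition strictly_upper (R : ringType) (n : nat) (A : 'M[R]_n) : Prop :=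
  forall i j : 'I_n, (j <= i)%N -> A i j = 0.

Definition Ucol (R : ringType) (n : nat) (U : 'M[R]_n) (j : nat) : 'M[R]_n :=
  \matrix_(r, s) (if ((s.+1 == j) && (r.+1 <= j - 1))%N then U r s else 0).

(* Main.v *)
Require Import Defs.
From HB Require Import structures.
From mathcomp Require Import all_boot all_order all_algebra.
From mathcomp Require Import reals zify.
Import Order.TTheory GRing.Theory Num.Theory.
Local Open Scope ring_scope.

Lemma unit_IU (R : realType) n (U : 'M[R]_n) : strictly_upper U -> (1%:M - U) \in unitmx.
Proof.
move=> hU; rewrite unitmxE -det_tr det_trig.
  rewrite big1 ?unitr1 // => i _; rewrite !mxE eqxx hU // subr0 //.
apply/is_trig_mxP => i j lij; rewrite !mxE hU; last by apply: ltnW.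
rewrite subr0; case: eqP => [h|//]; by move: lij; rewrite h ltnn.
Qed.

Lemma Ucol_eq (R : realType) n (U : 'M[R]_n) j (a b : 'cV[R]_n) :
  (forall t : 'I_n, t.+1 = j -> a t 0 = b t 0) -> Ucol U j *m a = Ucol U j *m b.
Proof.
move=> H; apply/matrixP => r c'; rewrite (ord1 c') !mxE; apply: eq_bigr => t _; rewrite !mxE.
case: ifP => [/andP[/eqP Ht _]|_]; [by rewrite H | by rewrite !mul0r].
Qed.

Lemma Ucol_zero (R : realType) n (U : 'M[R]_n) m (a : 'cV[R]_n) (t : 'I_n) :
  (n <= t + m)%N -> (Ucol U (n.+1 - m) *m a) t 0 = 0.
Proof.
move=> H; rewrite mxE big1 // => s _; rewrite mxE.
case: ifP => [/andP[_ h]|_]; last by rewrite mul0r.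
exfalso; move: h; lia.
Qed.

Lemma sum_Ucol (R : realType) n (U : 'M[R]_n) : strictly_upper U ->
  \sum_(1 <= m < n) Ucol U (n.+1 - m) = U.
Proof.
move=> hU; apply/matrixP => r s; rewrite summxE.
case: (ltnP r s) => hrs; last first.
  rewrite hU // big1 // => m _; rewrite mxE hU //; by case: ifP.
have hm : ((n - s)%N \in index_iota 1 n).
  rewrite mem_index_iota; have := ltn_ord s; lia.
rewrite (bigD1_seq (n - s)%N) ?iota_uniq //= mxE.
have -> : ((s.+1 == n.+1 - (n - s)%N) && (r.+1 <= n.+1 - (n - s)%N - 1))%N.
  apply/andP; split; [apply/eqP|]; have := ltn_ord s; lia.
rewrite big_seq_cond big1 ?addr0 // => m /andP[hm1 hm2]; rewrite mxE.
move: hm1; rewrite mem_index_iota => hm1.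
case: ifP => // /andP[/eqP h _]; exfalso; move/eqP: hm2; apply; have := ltn_ord s; lia.
Qed.

Theorem theorem6p2 (R : realType) (n : nat) (L U : 'M[R]_n) (c : 'cV[R]_n)
  (y : nat -> 'cV[R]_n) (x : nat -> nat -> 'cV[R]_n) :
  strictly_lower L -> strictly_upper U ->
  (forall k, y k.+1 = invmx (1%:M - U) *m (L *m y k + c)) ->
  x 0%N n = y 0%N ->
  (forall k i, (1 <= i <= n)%N ->
     x k.+1 i = \sum_(1 <= m < i) Ucol U (n.+1 - m) *m x k.+1 m
              + \sum_(i <= m < n) Ucol U (n.+1 - m) *m x k m
              + L *m x k n + c) ->
  forall k, x k n = y k.
Proof.
move=> hL hU hy h0 Hx k; elim: k => [//|k IH].
case: n L U c y x hL hU hy h0 Hx IH => [|n'] L U c y x hL hU hy h0 Hx IH.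
  by apply/matrixP => -[].
set n := n'.+1.
have Hv := Hx k n (leqnn _).
rewrite (big_geq (m:=n) (n:=n)) // addr0 in Hv.
have HU : U *m x k.+1 n = \sum_(1 <= m < n) Ucol U (n.+1 - m) *m x k.+1 m.
  rewrite -{1}(sum_Ucol _ _ _ hU) mulmx_suml; apply: eq_big_nat => m hm.
  symmetry; apply: Ucol_eq => t ht.
  rewrite Hx; last by lia.
  rewrite [in RHS]Hv !mxE !summxE.
  rewrite [in RHS](big_cat_nat _ (n := m)) /=; [|lia|lia].
  have Z : forall a : nat -> 'cV[R]_n'.+1,
      \sum_(m <= i < n'.+1) (Ucol U (n'.+2 - i) *m a i) t 0 = 0.
    move=> a; rewrite big_nat_cond big1 // => i /andP[/andP[hi _] _].
    apply: Ucol_zero; rewrite /n in ht; lia.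
  by rewrite !Z.
have HIU : (1%:M - U) *m x k.+1 n = L *m x k n + c.
  rewrite mulmxBl mul1mx HU {1}Hv.
  by rewrite addrC !addrA addNr add0r.
by rewrite hy -IH -HIU mulKmx // (unit_IU _ _ _ hU).
Qed.
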